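(* Fix $p\in(0,1)$ and $u\in(0,1)$, and let $\Theta_\infty(u)$ be the random variable defined in the context. Then for $k=1,2,\dots$, $$E[\Theta_\infty^k(u)]=\frac{1-p}{1-pu^k-(1-p)(1-u)^k}\sum_{j=0}^{k-1}\binom kj u^{k-j}(1-u)^jE[\Theta_\infty^j(u)].$$
   Context: Let $G_0,G_1,\dots$ be IID random variables with $P(G_0=n)=p^{n-1}(1-p)$ for $n\in\{1,2,\dots\}$, let $T_k=G_0+\dots+G_k$, and define $\Theta_\infty(u)=\sum_{k=0}^\infty u^{T_k}\left(\frac{1-u}{u}\right)^k$. (Its law is the unique probability measure $\mu_u$ on $[0,1]$ with $\mu_u=(1-p)\mu_u\circ S_0^{-1}+p\,\mu_u\circ S_1^{-1}$, where $S_0(x)=u+(1-u)x$, $S_1(x)=ux$.) Here $E[\Theta_\infty^0(u)]=1$. *)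

(* Defs.v *)
From HB Require Import structures.
From mathcomp Require Import all_boot all_order all_algebra.
From mathcomp Require Import all_classical all_reals all_analysis.
Set Implicit Arguments. Unset Strict Implicit. Unset Printing Implicit Defensive.
Import Order.TTheory GRing.Theory Num.Theory.
Local Open Scope ring_scope.
Local Open Scope classical_set_scope.

Definition Tsum (T : Type) (G : nat -> T -> nat) (k : nat) (t : T) : nat :=
  (\sum_(i < k.+1) G i t)%N.

Definition Theta (R : realType) (T : Type) (u : R) (G : nat -> T -> nat) (t : T) : R :=
  limn (fun n => \sum_(k < n) (u ^+ Tsum G k t * ((1 - u) / u) ^+ k)).

(* G_0, G_1, ... are IID with P(G_i = n) = p^(n-1) (1-p), n >= 1:
   each G_i takes values in {1,2,...}, the events {G_i = n} are measurable,
   and the joint pmf of (G_0,...,G_n) is the product of geometric pmfs. *)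
Definition iid_geometric (d : measure_display) (T : measurableType d) (R : realType)
  (P : probability T R) (p : R) (G : nat -> T -> nat) : Prop :=
  [/\ (forall i t, (0 < G i t)%N),
      (forall i n, measurable (G i @^-1` [set n]))
    & (forall (n : nat) (v : nat -> nat), (forall i, (0 < v i)%N) ->
        P [set t | forall i, (i <= n)%N -> G i t = v i] =
        (\prod_(i < n.+1) (p ^+ (v i).-1 * (1 - p)))%:E)].

(* Main.v *)
Require Import Defs.
From HB Require Import structures.
From mathcomp Require Import all_boot all_order all_algebra.
From mathcomp Require Import all_classical all_reals all_analysis.
Import Order.TTheory GRing.Theory Num.Theory.
Local Open Scope ring_scope.
Section S.
Context {R : realType} (p : R).
Hypothesis p0 : 0 <= p.
Hypothesis p1 : p <= 1.

Definition qg (m : nat) : R := if m is m'.+1 then p ^+ m' * (1 - p) else 0.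

Lemma qg_ge0 m : 0 <= qg m.
Proof. case: m => [|m] //=; apply: mulr_ge0; [exact: exprn_ge0| by rewrite subr_ge0]. Qed.

Definition vcons (m : nat) (v : nat -> nat) : nat -> nat :=
  fun i => if i is i'.+1 then v i' else m.

Fixpoint S (N : nat) (F : (nat -> nat) -> R) : \bar R :=
  match N with
  | 0 => (F (fun _ => 0%N))%:E
  | N'.+1 => (\sum_(m <oo) ((qg m)%:E * S N' (fun v => F (vcons m v))))%E
  end.

Lemma S_ge0 N F : (forall v, 0 <= F v) -> (0 <= S N F)%E.
Proof.
elim: N F => [|N IH] F F0 /=; first by rewrite lee_fin.
apply: nneseries_ge0 => m _ _; apply: mule_ge0; first by rewrite lee_fin qg_ge0.
exact: IH.
Qed.

Lemma S_scale N c F : 0 <= c -> (forall v, 0 <= F v) ->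
  S N (fun v => c * F v) = (c%:E * S N F)%E.
Proof.
move=> c0; elim: N F => [|N IH] F F0 /=; first by [].
rewrite -nneseriesZl; last first.
  move=> m _; apply: mule_ge0; first by rewrite lee_fin qg_ge0.
  exact: S_ge0.
apply: eq_eseriesr => m _.
by rewrite IH // muleCA.
Qed.

Lemma S_sum N k (Fs : nat -> (nat -> nat) -> R) : (forall j v, 0 <= Fs j v) ->
  S N (fun v => \sum_(j < k) Fs j v) = (\sum_(j < k) S N (Fs j))%E.
Proof.
elim: N Fs => [|N IH] Fs F0 /=; first by rewrite sumEFin.
transitivity (\sum_(m <oo) \sum_(j < k)
   ((qg m)%:E * S N (fun v => Fs j (vcons m v))))%E.
  apply: eq_eseriesr => m _.
  rewrite (IH (fun j v => Fs j (vcons m v))) // ge0_sume_distrr //.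
  move=> j _; apply: S_ge0 => v; exact: F0.
rewrite nneseries_sum //.
move=> j m _; apply: mule_ge0; first by rewrite lee_fin qg_ge0.
exact: S_ge0.
Qed.

Lemma S_prod N (f : nat -> R) (g : (nat -> nat) -> R) :
  (forall m, 0 <= f m) -> (forall v, 0 <= g v) -> S N g \is a fin_num ->
  S N.+1 (fun v => f (v 0%N) * g (fun i => v i.+1)) =
  ((\sum_(m <oo) (qg m * f m)%:E) * S N g)%E.
Proof.
move=> f0 g0 gfin /=.
transitivity (\sum_(m <oo) ((qg m * f m)%:E * S N g))%E.
  apply: eq_eseriesr => m _.
  by rewrite /= S_scale // muleA -EFinM.
rewrite -(fineK gfin) [in RHS]muleC -nneseriesZl.
  by apply: eq_eseriesr => m _; rewrite muleC.
move=> m _; rewrite lee_fin; apply: mulr_ge0 => //; exact: qg_ge0.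
Qed.

End S.
From mathcomp Require Import zify ring lra.
From mathcomp Require Import measurable_realfun.
Import numFieldNormedType.Exports.
Local Open Scope classical_set_scope.

Section Prob.
Context (d : measure_display) (T : measurableType d) (R : realType)
  (P : probability T R) (p : R) (G : nat -> T -> nat).
Hypothesis p0 : 0 <= p.
Hypothesis p1 : p <= 1.
Hypothesis Gpos : forall i t, (0 < G i t)%N.
Hypothesis Gmeas : forall i n, measurable (G i @^-1` [set n]).
Hypothesis Gpmf : forall (n : nat) (v : nat -> nat), (forall i, (0 < v i)%N) ->
        P [set t | forall i, (i <= n)%N -> G i t = v i] =
        (\prod_(i < n.+1) (p ^+ (v i).-1 * (1 - p)))%:E.

Definition GG (t : T) : nat -> nat := fun i => G i t.
Definition Ev (a : nat -> nat) (j : nat) : set T :=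
  [set t | forall i, (i < j)%N -> G i t = a i].
Definition splice (a : nat -> nat) (j : nat) (v : nat -> nat) : nat -> nat :=
  fun i => if (i < j)%N then a i else v (i - j)%N.
Definition dep (F : (nat -> nat) -> R) (n : nat) :=
  forall v w, (forall i, (i < n)%N -> v i = w i) -> F v = F w.
Definition seta (a : nat -> nat) (j m : nat) : nat -> nat :=
  fun i => if i == j then m else a i.

Lemma mfun_nat (g : T -> nat) (f : nat -> R) :
  (forall n, measurable (g @^-1` [set n])) ->
  measurable_fun setT (fun t => f (g t)).
Proof.
move=> gm _ B mB; rewrite setTI.
have -> : (fun t => f (g t)) @^-1` B = \bigcup_(n in [set n | B (f n)]) g @^-1` [set n].
  apply/seteqP; split => [t /= Bt|t [n /= Bn] /= gtn]; [by exists (g t) | by rewrite gtn].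
by apply: bigcup_measurable => n _; exact: gm.
Qed.

Lemma Ev_meas a j : measurable (Ev a j).
Proof.
elim: j => [|j IH].
  have -> : Ev a 0 = setT by apply/seteqP; split => // t _ i.
  exact: measurableT.
have -> : Ev a j.+1 = Ev a j `&` (G j @^-1` [set a j]).
  apply/seteqP; split => [t /= H|t [/= H1 H2] i]; first split.
  - by move=> i ij; apply: H; lia.
  - by apply: H.
  rewrite ltnS leq_eqVlt => /orP[/eqP -> //|]; exact: H1.
exact: measurableI.
Qed.

Lemma P_Ev a j : P (Ev a j) = (\prod_(i < j) qg p (a i))%:E.
Proof.
have [[i /andP[ij /eqP ai0]]|H] := pselect (exists i, (i < j)%N && (a i == 0%N)).
  have -> : Ev a j = set0.
    apply/seteqP; split => // t /= Ht; have := Gpos i t; by rewrite Ht // ai0.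
  by rewrite measure0 (bigD1 (Ordinal ij)) //= ai0 mul0r.
case: j H => [|n] H.
  have -> : Ev a 0 = setT by apply/seteqP; split => // t _ i.
  by rewrite probability_setT big_ord0.
pose v i := if (i < n.+1)%N then a i else 1%N.
have vpos i : (0 < v i)%N.
  rewrite /v; case: ifPn => // il; case: (ltnP 0 (a i)) => // ai0.
  by exfalso; apply: H; exists i; rewrite il /=; lia.
have -> : Ev a n.+1 = [set t | forall i, (i <= n)%N -> G i t = v i].
  apply/seteqP; split => t /= Ht i il.
    have il' : (i < n.+1)%N by lia.
    by rewrite Ht // /v il'.
  have il' : (i < n.+1)%N by lia.
  by have := Ht i il'; rewrite /v il'.
rewrite Gpmf //; congr (_%:E); apply: eq_bigr => i _.
rewrite /v ltn_ord; have := vpos i; rewrite /v ltn_ord.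
by case: (a i).
Qed.


Lemma splice_seta a j m v :
  splice (seta a j m) j.+1 v = splice a j (vcons m v).
Proof.
apply/funext => i; rewrite /splice /seta /vcons.
case: (ltngtP i j) => [ij|ji|->].
- by rewrite (ltn_trans ij (ltnSn j)).
- rewrite ltnS leqNgt ji /=.
  have -> : (i - j = (i - j.+1).+1)%N by lia.
  by [].
- by rewrite ltnSn subnn.
Qed.

Lemma claim N : forall j a F, dep F (j + N) -> (forall v, 0 <= F v) ->
  measurable_fun setT (fun t => F (GG t)) ->
  (\int[P]_(t in Ev a j) (F (GG t))%:E =
   (\prod_(i < j) qg p (a i))%:E * S p N (fun v => F (splice a j v)))%E.
Proof.
elim: N => [|N IH] j a F Fd F0 Fm.
  rewrite addn0 in Fd; rewrite /=.
  rewrite (@eq_integral _ _ _ _ _ (fun _ => (F (splice a j (fun=> 0%N)))%:E)); last first.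
    move=> t; rewrite inE /= => Ht; congr (_%:E); apply: Fd => i ij.
    by rewrite /GG /splice ij Ht.
  rewrite integral_cst; last exact: Ev_meas.
  by rewrite muleC; congr (_ * _)%E; exact: P_Ev.
have Ebig : Ev a j = \bigcup_m Ev (seta a j m) j.+1.
  apply/seteqP; split => [t Ht|t [m _ Ht] i ij].
    exists (G j t) => //= i; rewrite ltnS leq_eqVlt => /orP[/eqP ->|ij].
      by rewrite /seta eqxx.
    by rewrite /seta (ltn_eqF ij); apply: Ht.
  have := Ht i (ltn_trans ij (ltnSn j)); by rewrite /seta (ltn_eqF ij).
rewrite Ebig ge0_integral_bigcup //; first last.
- move=> m m' _ _ [t [/= H1 H2]].
  by have := H1 j (ltnSn j); have := H2 j (ltnSn j); rewrite /seta eqxx => <- <-.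
- by move=> t _; rewrite lee_fin.
- by apply/measurable_realfun.measurable_EFinP; apply: measurable_funS Fm.
- by move=> m; apply: Ev_meas.
transitivity (\sum_(m <oo) ((\prod_(i < j) qg p (a i))%:E *
   ((qg p m)%:E * S p N (fun v => F (splice a j (vcons m v))))))%E.
  apply: eq_eseriesr => m _.
  rewrite IH //; last by move=> v w H; apply: Fd => i il; apply: H; lia.
  have -> : (fun v => F (splice (seta a j m) j.+1 v)) =
            (fun v => F (splice a j (vcons m v))).
    by apply/funext => v; rewrite splice_seta.
  rewrite big_ord_recr /= EFinM -muleA; congr ((_%:E) * (_%:E * _))%E.
    by apply: eq_bigr => i _; rewrite /seta (ltn_eqF (ltn_ord i)).
  by rewrite /seta eqxx.
rewrite nneseriesZl //= => m _.
apply: mule_ge0; first by rewrite lee_fin qg_ge0.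
exact: S_ge0.
Qed.

End Prob.

Section Th.
Context {R : realType} (u : R).
Hypothesis u0 : 0 < u.
Hypothesis u1 : u < 1.

Definition ThN (N : nat) (v : nat -> nat) : R :=
  \sum_(k < N) u ^+ (\sum_(i < k.+1) v i)%N * ((1 - u) / u) ^+ k.

Lemma c_ge0 : 0 <= (1 - u) / u.
Proof. by apply: divr_ge0; [rewrite subr_ge0 ltW | exact: ltW]. Qed.

Lemma ThN_rec N v :
  ThN N.+1 v = u ^+ v 0%N * (1 + (1 - u) / u * ThN N (fun i => v i.+1)).
Proof.
rewrite /ThN big_ord_recl /= big_ord1 expr0 mulr1 mulrDr mulr1; congr (_ + _).
rewrite mulr_sumr mulr_sumr; apply eq_bigr => k _.
rewrite big_ord_recl /= exprD exprS /bump /=.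
have -> : (\sum_(i < k.+1) v (1 + i))%N = (\sum_(i < k.+1) v i.+1)%N by [].
ring.
Qed.

Lemma ThN_ge0 N v : 0 <= ThN N v.
Proof.
apply: sumr_ge0 => k _; apply: mulr_ge0; apply: exprn_ge0; first exact: ltW.
exact: c_ge0.
Qed.

Lemma ThN_le1 N v : (forall i, (0 < v i)%N) -> ThN N v <= 1.
Proof.
elim: N v => [|N IH] v vpos; first by rewrite /ThN big_ord0.
rewrite ThN_rec.
have h1 : u ^+ v 0%N <= u.
  have := vpos 0%N; case: (v 0%N) => // n _.
  rewrite exprS -[leRHS]mulr1 ler_wpM2l //; first exact: ltW.
  exact: exprn_ile1 (ltW u0) (ltW u1).
have h2 : 0 <= 1 + (1 - u) / u * ThN N (fun i => v i.+1).
  by apply: addr_ge0 => //; apply: mulr_ge0; [exact: c_ge0|exact: ThN_ge0].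
have h3 : 1 + (1 - u) / u * ThN N (fun i => v i.+1) <= 1 + (1 - u) / u.
  rewrite lerD2l ler_piMr ?c_ge0 //; exact: IH.
apply: (le_trans (ler_pM _ _ h1 h3)); [exact: exprn_ge0 (ltW u0)| exact: h2|].
rewrite mulrDr mulr1 mulrCA divff ?mulr1; last by rewrite gt_eqF.
by rewrite addrC subrK.
Qed.

Lemma ThN_mono v : {homo (fun N => ThN N v) : n m / (n <= m)%N >-> n <= m}.
Proof.
apply/nondecreasing_seqP => N.
rewrite /ThN big_ord_recr /= lerDl; apply: mulr_ge0; apply: exprn_ge0.
  exact: ltW.
exact: c_ge0.
Qed.

Lemma ThN_cvg v : (forall i, (0 < v i)%N) ->
  (fun N => ThN N v) @ \oo --> limn (fun N => ThN N v).
Proof.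
move=> vpos; apply/cvg_ex; exists (sup (range (fun N => ThN N v))).
apply: nondecreasing_cvgn; first exact: ThN_mono.
by exists 1 => _ [N _ <-]; exact: ThN_le1.
Qed.

Lemma ThN_dep N j v w : (forall i, (i < N)%N -> v i = w i) -> ThN N v ^+ j = ThN N w ^+ j.
Proof.
move=> H; congr (_ ^+ _); apply: eq_bigr => k _; congr (_ ^+ _ * _).
apply: eq_bigr => i _; apply: H.
by apply: (leq_trans (ltn_ord i)); exact: ltn_ord k.
Qed.

Lemma geom_sum (p : R) (x : R) : 0 <= p -> p < 1 -> 0 <= x -> x < 1 ->
  (\sum_(m <oo) (qg p m * x ^+ m)%:E)%E = ((1 - p) * x / (1 - p * x))%:E.
Proof.
move=> p0 p1 x0 x1.
have px1 : `|p * x| < 1.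
  rewrite ger0_norm ?mulr_ge0 //.
  by apply: (le_lt_trans _ p1); rewrite ler_piMr // ltW.
have cv := @cvg_geometric_series _ ((1 - p) * x) _ px1.
set f := fun m => qg p m * x ^+ m.
have cvf : series f @ \oo --> (1 - p) * x / (1 - p * x).
  rewrite -cvg_shiftS; apply: cvg_trans cv; apply: near_eq_cvg; apply: nearW => n /=.
  rewrite /series /= big_nat_recl //= /f /= mul0r add0r.
  apply: eq_bigr => i _; rewrite /geometric /= exprS exprMn; ring.
rewrite /=.
transitivity (limn (EFin \o series f)).
  by congr (limn _); apply/funext => n; rewrite /= /series /= sumEFin.
by rewrite EFin_lim ?(cvg_lim _ cvf) //; apply/cvg_ex; eexists; exact: cvf.
Qed.

End Th.

Lemma ThN_meas (d : measure_display) (T : measurableType d) (R : realType)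
  (u : R) (G : nat -> T -> nat) N j :
  (forall i n, measurable (G i @^-1` [set n])) ->
  measurable_fun setT (fun t => ThN u N (GG d T G t) ^+ j).
Proof.
move=> Gm; apply: measurable_realfun.measurable_funX.
rewrite /ThN; apply: measurable_sum => k.
apply: (@measurable_realfun.measurable_funM _ _ _ _ (fun t => u ^+ (\sum_(i < k.+1) G i t)%N)
          (fun=> ((1 - u) / u) ^+ k)); last exact: measurable_cst.
have -> : (fun t => u ^+ (\sum_(i < k.+1) G i t)%N) =
          (fun t => \prod_(i < k.+1) u ^+ G i t).
  by apply/funext => t; rewrite expr_sum.
apply: measurable_prod => i _.
exact: (@mfun_nat d T R (G i) (fun n => u ^+ n) (Gm i)).
Qed.

Theorem proposition1 (d : measure_display) (T : measurableType d) (R : realType)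
  (P : probability T R) (p u : R) (G : nat -> T -> nat) :
  0 < p < 1 -> 0 < u < 1 -> iid_geometric P p G ->
  forall k : nat, (0 < k)%N ->
  (\int[P]_t ((Theta u G t) ^+ k)%:E =
   ((1 - p) / (1 - p * u ^+ k - (1 - p) * (1 - u) ^+ k))%:E *
   \sum_(j < k) (('C(k, j))%:R * u ^+ (k - j) * (1 - u) ^+ j)%:E *
                 \int[P]_t ((Theta u G t) ^+ j)%:E)%E.
Proof.
move=> /andP[p0 p1] /andP[u0 u1] [Gpos Gmeas Gpmf] k k0.
have p0' := ltW p0; have p1' := ltW p1.
pose c := (1 - u) / u.
have c0 : 0 <= c by exact: c_ge0.
pose I N j := (\int[P]_t (ThN u N (GG d T G t) ^+ j)%:E)%E.
have GGpos t i : (0 < GG d T G t i)%N by exact: Gpos.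
have Th01 N j t : 0 <= ThN u N (GG d T G t) ^+ j <= 1.
  apply/andP; split; first by apply: exprn_ge0; exact: ThN_ge0.
  by apply: exprn_ile1; [exact: ThN_ge0 | exact: ThN_le1].
have IS N j : I N j = S p N (fun v => ThN u N v ^+ j).
  have H := @claim d T R P p G p0' p1' Gpos Gmeas Gpmf N 0 (fun=> 0%N)
    (fun v => ThN u N v ^+ j) (fun v w => @ThN_dep R u N j v w)
    (fun v => exprn_ge0 j (@ThN_ge0 _ u u0 u1 N v)) (@ThN_meas d T R u G N j Gmeas).
  have E0 : Ev d T G (fun=> 0%N) 0 = setT by apply/seteqP; split => // t _ i.
  rewrite E0 big_ord0 mul1e in H; rewrite /I H.
  congr (S p N _); apply/funext => v; congr (ThN u N _ ^+ j).
  by apply/funext => i; rewrite /splice ltn0 subn0.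
have ThN_meas' N j : measurable_fun setT (EFin \o (fun t => ThN u N (GG d T G t) ^+ j)).
  by apply/measurable_realfun.measurable_EFinP; exact: ThN_meas.
have ig : P.-integrable setT (EFin \o cst (1:R)).
  exact: (finite_measure_integrable_cst P 1 measurableT).
have Iint N j : P.-integrable setT (fun t => (ThN u N (GG d T G t) ^+ j)%:E).
  apply: le_integrable ig; first exact: measurableT.
  - exact: ThN_meas'.
  - move=> t _; have /andP[h1 h2] := Th01 N j t.
    have -> : ((EFin \o cst (1:R)) t) = 1%E by [].
    by rewrite abse1 abse_EFin lee_fin ger0_norm.
have Ifin N j : I N j \is a fin_num by exact: (integrable_fin_num measurableT (Iint N j)).
pose m N j := fine (I N j).
have Ieq N j : I N j = (m N j)%:E by rewrite /m fineK.
pose A := (1 - p) * u ^+ k / (1 - p * u ^+ k).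
have uk0 : 0 <= u ^+ k by apply: exprn_ge0; exact: ltW.
have uk1 : u ^+ k < 1 by rewrite exprn_ilt1 ?ltW // -lt0n.
have Rec N : m N.+1 k = A * \sum_(j < k.+1) (c ^+ j * 'C(k, j)%:R) * m N j.
  pose g w := \sum_(j < k.+1) (c ^+ j * 'C(k, j)%:R) * ThN u N w ^+ j.
  have cj0 j : 0 <= c ^+ j * 'C(k, j)%:R by apply: mulr_ge0; [exact: exprn_ge0|].
  have g0 w : 0 <= g w.
    apply: sumr_ge0 => j _; apply: mulr_ge0 => //; apply: exprn_ge0; exact: ThN_ge0.
  have Sg : S p N g = (\sum_(j < k.+1) (c ^+ j * 'C(k, j)%:R) * m N j)%:E.
    rewrite /g (@S_sum R p p0' p1' N k.+1 (fun j w => (c ^+ j * 'C(k, j)%:R) * ThN u N w ^+ j)); last first.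
      move=> j w; apply: mulr_ge0 => //; apply: exprn_ge0; exact: ThN_ge0.
    rewrite -sumEFin; apply: eq_bigr => j _.
    rewrite S_scale //; last by move=> v; apply: exprn_ge0; exact: ThN_ge0.
    by rewrite -IS Ieq -EFinM.
  have step : I N.+1 k = S p N.+1 (fun v => (u ^+ k) ^+ (v 0%N) * g (fun i => v i.+1)).
    rewrite IS; congr (S p N.+1 _); apply/funext => v.
    rewrite ThN_rec exprMn -exprM mulnC exprM; congr (_ * _).
    rewrite addrC exprD1n /g; apply: eq_bigr => j _.
    by rewrite exprMn -mulr_natr; ring.
  rewrite /m step S_prod //; last by rewrite Sg.
  - by rewrite geom_sum // Sg -EFinM.
  - by move=> n; apply: exprn_ge0.
pose M j := fine (\int[P]_t ((Theta u G t) ^+ j)%:E).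
have DCT j : (\int[P]_t ((Theta u G t) ^+ j)%:E = (M j)%:E)%E /\ (fun N => m N j) @ \oo --> M j.
  have Thcvg t : (fun N => ThN u N (GG d T G t) ^+ j) @ \oo --> Theta u G t ^+ j.
    apply: (@continuous_cvg _ _ _ _ _ (fun N => ThN u N (GG d T G t)) (fun x => x ^+ j)).
      exact: exprn_continuous.
    exact: ThN_cvg.
  have mf : measurable_fun setT (EFin \o (fun t => Theta u G t ^+ j)).
    apply/measurable_realfun.measurable_EFinP.
    apply: (@measurable_realfun.measurable_fun_cvg _ _ _ _ (fun N t => ThN u N (GG d T G t) ^+ j)).
      by move=> N; exact: ThN_meas.
    by move=> t _; exact: Thcvg.
  have ff : {ae P, forall x, setT x ->
     (fun N => (ThN u N (GG d T G x) ^+ j)%:E) @ \oo --> (Theta u G x ^+ j)%:E}.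
    apply: aeW => t _; apply/fine_cvgP; split; first exact: nearW.
    exact: Thcvg.
  have fg : {ae P, forall x n, setT x ->
     (`|(ThN u n (GG d T G x) ^+ j)%:E| <= (EFin \o cst 1%R) x)%E}.
    apply: aeW => t n _; have /andP[h1 h2] := Th01 n j t.
    have -> : ((EFin \o cst (1:R)) t) = (1%:E)%E by [].
    by rewrite abse_EFin lee_fin ger0_norm.
  have [fint _ fcvg] := @dominated_convergence d T R P setT measurableT
     (fun N t => (ThN u N (GG d T G t) ^+ j)%:E) (fun t => (Theta u G t ^+ j)%:E)
     (EFin \o cst (1:R)) (fun N => ThN_meas' N j) mf ff ig fg.
  have ffin := integrable_fin_num measurableT fint.
  split; first by rewrite /M fineK.
  move: fcvg; rewrite -(fineK ffin) => /fine_cvgP [_].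
  by [].
have Mrec : M k = A * \sum_(j < k.+1) (c ^+ j * 'C(k, j)%:R) * M j.
  have h1 : (fun N => m N.+1 k) @ \oo --> M k.
    by rewrite (cvg_shiftS (fun N => m N k)); exact: (DCT k).2.
  have h2 : (fun N => m N.+1 k) @ \oo --> A * \sum_(j < k.+1) (c ^+ j * 'C(k, j)%:R) * M j.
    have -> : (fun N => m N.+1 k) =
      (fun N => A * \sum_(j < k.+1) (c ^+ j * 'C(k, j)%:R) * m N j).
      by apply/funext => N; exact: Rec.
    apply: (cvgM (f := cst A) (g := fun N => \sum_(j < k.+1) (c ^+ j * 'C(k, j)%:R) * m N j)).
      exact: cvg_cst.
    apply: cvg_big; first exact: add_continuous.
    move=> j _; apply: (cvgM (f := cst (c ^+ j * 'C(k, j)%:R)) (g := fun N => m N j)).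
      exact: cvg_cst.
    exact: (DCT j).2.
  by rewrite -(cvg_lim (@Rhausdorff R) h1) (cvg_lim (@Rhausdorff R) h2).
rewrite (DCT k).1.
under eq_bigr => j _ do rewrite (DCT j).1 -EFinM.
rewrite sumEFin -EFinM; congr (_%:E).
have un0 : u != 0 by rewrite gt_eqF.
pose S' := \sum_(j < k) (c ^+ j * 'C(k, j)%:R) * M j.
have HS : \sum_(j < k) 'C(k, j)%:R * u ^+ (k - j) * (1 - u) ^+ j * M j = u ^+ k * S'.
  rewrite /S' mulr_sumr; apply: eq_bigr => j _.
  have -> : u ^+ k = u ^+ (k - j) * u ^+ j by rewrite -exprD subnK // ltnW.
  rewrite /c expr_div_n; field.
  by rewrite expf_neq0.
rewrite HS.
move: Mrec; rewrite big_ord_recr /= binn mulr1 -/S' => Mrec.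
have ck : u ^+ k * c ^+ k = (1 - u) ^+ k by rewrite -exprMn /c mulrC divfK.
have pk : 1 - p * u ^+ k != 0.
  rewrite subr_eq0 eq_sym lt_eqF //; apply: (le_lt_trans _ p1).
  by rewrite ler_piMr // ltW.
have Dpos : 0 < 1 - p * u ^+ k - (1 - p) * (1 - u) ^+ k.
  have a1 : p * u ^+ k < p by rewrite -[ltRHS]mulr1 ltr_pM2l.
  have a2 : (1 - p) * (1 - u) ^+ k <= 1 - p.
    rewrite ler_piMr //; first by rewrite subr_ge0 ltW.
    apply: exprn_ile1; [rewrite subr_ge0; exact: ltW | lra].
  lra.
have Dn0 : 1 - p * u ^+ k - (1 - p) * (1 - u) ^+ k != 0 by rewrite gt_eqF.
have E1 : (1 - p * u ^+ k) * M k = (1 - p) * u ^+ k * S' + (1 - p) * (u ^+ k * c ^+ k) * M k.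
  by rewrite {1}Mrec /A; field.
rewrite ck in E1.
have E2 : (1 - p * u ^+ k - (1 - p) * (1 - u) ^+ k) * M k = (1 - p) * u ^+ k * S'.
  have -> : (1 - p * u ^+ k - (1 - p) * (1 - u) ^+ k) * M k =
     (1 - p * u ^+ k) * M k - (1 - p) * (1 - u) ^+ k * M k by ring.
  rewrite E1; ring.
apply: (mulfI Dn0); rewrite E2; field; exact: Dn0.
Qed.
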